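(* For all $\widehat\psi_1,\widehat\psi_2\in\mathcal{M}_0$ with $\widehat\psi_1\le\widehat\psi_2$ entrywise, one has $\widehat\Phi(\widehat\psi_1)\ge\widehat\Phi(\widehat\psi_2)$ entrywise.
   Context: Discrete setting: $\Omega=(0,1)$, $T>0$, $\sigma>0$; $u_T:[0,1]\to\mathbb{R}$ bounded. $f:[0,1]\times\mathbb{R}\to\mathbb{R}$ is continuous and nonincreasing in its second variable, bounded, and $f\le0$. For positive integers $I,J$: $\Delta t=T/I$, $\Delta x=1/J$, $x_j=j\Delta x$. $\mathcal{M}$ is the set of real matrices $(m_{i,j})_{0\le i\le I,0\le j\le J}$, $\mathcal{M}_\epsilon=\{m\in\mathcal{M}: m_{i,j}\ge\epsilon\ \forall i,j\}$. For $\widehat\psi\in\mathcal{M}_0$, $\widehat\Phi(\widehat\psi)$ is the unique $\widehat\phi\in\mathcal{M}$ with $\widehat\phi_{I,j}=\exp(u_T(x_j)/\sigma^2)$ and, for $0\le i\le I-1$, $0\le j\le J$, $\frac{\widehat\phi_{i+1,j}-\widehat\phi_{i,j}}{\Delta t}+\frac{\sigma^2}{2}\frac{\widehat\phi_{i,j+1}-2\widehat\phi_{i,j}+\widehat\phi_{i,j-1}}{(\Delta x)^2}=-\frac{1}{\sigma^2}f(x_j,\widehat\phi_{i,j}\widehat\psi_{i,j})\widehat\phi_{i,j}$, with conventions $\widehat\phi_{i,-1}=\widehat\phi_{i,0}$, $\widehat\phi_{i,J+1}=\widehat\phi_{i,J}$ (existence and uniqueness being known, and $\widehat\phi\ge0$).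 *)

(* Defs.v *)
From Stdlib Require Import Reals Lra Lia.
Open Scope R_scope.

(* Matrices (m_{i,j})_{0<=i<=I, 0<=j<=J} are represented as functions
   nat -> nat -> R; only entries with i <= I, j <= J are meaningful. *)
Definition mat := nat -> nat -> R.

Definition in_M_eps (I J : nat) (eps : R) (m : mat) : Prop :=
  forall i j, (i <= I)%nat -> (j <= J)%nat -> eps <= m i j.

Definition mat_le (I J : nat) (m1 m2 : mat) : Prop :=
  forall i j, (i <= I)%nat -> (j <= J)%nat -> m1 i j <= m2 i j.

Definition dt (T : R) (I : nat) : R := T / INR I.
Definition dx (J : nat) : R := 1 / INR J.
Definition xg (J j : nat) : R := INR j * dx J.

(* Neumann-type conventions phi_{i,-1} = phi_{i,0}, phi_{i,J+1} = phi_{i,J} *)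
Definition left_nb (phi : mat) (i j : nat) : R :=
  match j with O => phi i O | S k => phi i k end.
Definition right_nb (J : nat) (phi : mat) (i j : nat) : R :=
  if Nat.eqb j J then phi i J else phi i (S j).

(* phi = Phi_hat(psi): the terminal condition and the implicit scheme *)
Definition is_Phi (T sigma : R) (uT : R -> R) (f : R -> R -> R)
    (I J : nat) (psi phi : mat) : Prop :=
  (forall j, (j <= J)%nat -> phi I j = exp (uT (xg J j) / sigma ^ 2)) /\
  (forall i j, (i < I)%nat -> (j <= J)%nat ->
     (phi (S i) j - phi i j) / dt T I
     + sigma ^ 2 / 2 * (right_nb J phi i j - 2 * phi i j + left_nb phi i j) / (dx J) ^ 2
     = - (1 / sigma ^ 2) * f (xg J j) (phi i j * psi i j) * phi i j).

Definition f_continuous (f : R -> R -> R) : Prop :=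
  forall x y, 0 <= x <= 1 -> forall eps, eps > 0 -> exists delta, delta > 0 /\
    forall x' y', 0 <= x' <= 1 -> Rabs (x' - x) < delta -> Rabs (y' - y) < delta ->
      Rabs (f x' y' - f x y) < eps.
Definition f_nonincreasing (f : R -> R -> R) : Prop :=
  forall x y1 y2, 0 <= x <= 1 -> y1 <= y2 -> f x y2 <= f x y1.
Definition f_bounded (f : R -> R -> R) : Prop :=
  exists C, forall x y, 0 <= x <= 1 -> Rabs (f x y) <= C.
Definition f_nonpos (f : R -> R -> R) : Prop :=
  forall x y, 0 <= x <= 1 -> f x y <= 0.
Definition uT_bounded (uT : R -> R) : Prop :=
  exists C, forall x, 0 <= x <= 1 -> Rabs (uT x) <= C.

(* Main.v *)
Require Import Defs.
From Stdlib Require Import Reals.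
From Stdlib Require Import Lra Lia.
Open Scope R_scope.

Lemma finite_argmax (h : nat -> R) (J : nat) :
  exists j, (j <= J)%nat /\ forall k, (k <= J)%nat -> h k <= h j.
Proof.
  induction J as [|J IH].
  - exists O; split; [lia|]. intros k Hk. assert (k = O) by lia; subst; lra.
  - destruct IH as [j [Hj Hm]].
    destruct (Rle_dec (h (S J)) (h j)).
    + exists j; split; [lia|]. intros k Hk.
      destruct (Nat.eq_dec k (S J)); [subst; lra|]. apply Hm; lia.
    + exists (S J); split; [lia|]. intros k Hk.
      destruct (Nat.eq_dec k (S J)); [subst; lra|].
      specialize (Hm k ltac:(lia)); lra.
Qed.

Lemma left_nb_eq (phi : mat) (i j : nat) : left_nb phi i j = phi i (Nat.pred j).
Proof. destruct j; reflexivity. Qed.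

Lemma right_nb_eq (J : nat) (phi : mat) (i j : nat) : (j <= J)%nat ->
  exists r, (r <= J)%nat /\ forall phi', right_nb J phi' i j = phi' i r.
Proof.
  intros Hj. unfold right_nb. destruct (Nat.eqb_spec j J).
  - exists J; split; [lia|]; reflexivity.
  - exists (S j); split; [lia|]; reflexivity.
Qed.

Lemma rearr (P p D s L R G X : R) : D <> 0 ->
  (P - p) / D + s * (R - 2 * p + L) / X = G ->
  P - p = D * G - D * (s * (R - 2 * p + L) / X).
Proof.
  intros HD H.
  assert (H1 : (P - p) / D = G - s * (R - 2 * p + L) / X) by lra.
  replace (P - p) with (D * ((P - p) / D)) by (field; auto).
  rewrite H1. ring.
Qed.

Theorem proposition8 (T sigma : R) (uT : R -> R) (f : R -> R -> R) (I J : nat)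
  (hT : 0 < T) (hsigma : 0 < sigma)
  (huT : uT_bounded uT)
  (hfc : f_continuous f) (hfm : f_nonincreasing f)
  (hfb : f_bounded f) (hfn : f_nonpos f)
  (hI : (0 < I)%nat) (hJ : (0 < J)%nat)
  (psi1 psi2 phi1 phi2 : mat)
  (hpsi1 : in_M_eps I J 0 psi1) (hpsi2 : in_M_eps I J 0 psi2)
  (hle : mat_le I J psi1 psi2)
  (hphi1 : is_Phi T sigma uT f I J psi1 phi1)
  (hphi2 : is_Phi T sigma uT f I J psi2 phi2)
  (hphi1nn : in_M_eps I J 0 phi1) (hphi2nn : in_M_eps I J 0 phi2) :
  mat_le I J phi2 phi1.
Proof.
  destruct hphi1 as [hT1 hE1]. destruct hphi2 as [hT2 hE2].
  assert (HD : 0 < dt T I).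
  { unfold dt. apply Rdiv_lt_0_compat; auto. apply lt_0_INR; lia. }
  assert (HX : 0 < dx J ^ 2).
  { unfold dx. apply pow_lt. apply Rdiv_lt_0_compat; [lra|]. apply lt_0_INR; lia. }
  assert (Hs2 : 0 < sigma ^ 2) by (apply pow_lt; auto).
  assert (Hmain : forall n, (n <= I)%nat -> forall j, (j <= J)%nat ->
            phi2 (I - n)%nat j <= phi1 (I - n)%nat j).
  { induction n as [|n IH]; intros Hn j Hj.
    - replace (I - 0)%nat with I by lia. rewrite hT1, hT2 by auto. lra.
    - set (i := (I - S n)%nat).
      assert (Hi : (i < I)%nat) by (unfold i; lia).
      assert (HSi : S i = (I - n)%nat) by (unfold i; lia).
      destruct (finite_argmax (fun k => phi2 i k - phi1 i k) J) as [m [Hm Hmax]].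
      cbv beta in Hmax.
      cut (phi2 i m - phi1 i m <= 0).
      { intros Hc. specialize (Hmax j Hj). lra. }
      apply Rnot_lt_le. intros Hpos.
      pose proof (IH ltac:(lia) m Hm) as Hnext. rewrite <- HSi in Hnext.
      pose proof (hE1 i m Hi Hm) as E1. pose proof (hE2 i m Hi Hm) as E2.
      rewrite !left_nb_eq in E1, E2.
      destruct (right_nb_eq J phi1 i m Hm) as [r [Hr Hrr]].
      rewrite Hrr in E1, E2.
      apply rearr in E1; [|lra]. apply rearr in E2; [|lra].
      assert (HxJ : 0 <= xg J m <= 1).
      { unfold xg, dx. assert (0 < INR J) by (apply lt_0_INR; lia).
        assert (INR m <= INR J) by (apply le_INR; auto).
        assert (0 <= INR m) by apply pos_INR.
        split.
        - apply Rmult_le_pos; [lra|]. apply Rlt_le, Rdiv_lt_0_compat; lra.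
        - replace (INR m * (1 / INR J)) with (INR m / INR J) by (field; lra).
          unfold Rdiv; rewrite <- (Rinv_r (INR J)) by lra; apply Rmult_le_compat_r; [apply Rlt_le, Rinv_0_lt_compat|]; lra. }
      assert (p1nn := hphi1nn i m ltac:(lia) Hm).
      assert (s1nn := hpsi1 i m ltac:(lia) Hm).
      assert (sle := hle i m ltac:(lia) Hm).
      assert (Hprod : phi1 i m * psi1 i m <= phi2 i m * psi2 i m).
      { apply Rmult_le_compat; lra. }
      assert (F2 := hfm (xg J m) _ _ HxJ Hprod).
      assert (F1 := hfn (xg J m) (phi1 i m * psi1 i m) HxJ).
      set (G1 := - (1 / sigma ^ 2) * f (xg J m) (phi1 i m * psi1 i m) * phi1 i m) in *.
      set (G2 := - (1 / sigma ^ 2) * f (xg J m) (phi2 i m * psi2 i m) * phi2 i m) in *.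
      assert (HG : G1 <= G2).
      { unfold G1, G2.
        assert (0 < 1 / sigma ^ 2) by (apply Rdiv_lt_0_compat; lra).
        rewrite !Rmult_assoc, <- !Ropp_mult_distr_l.
        apply Ropp_le_contravar. apply Rmult_le_compat_l; [lra|].
        assert (- f (xg J m) (phi1 i m * psi1 i m) * phi1 i m <=
                - f (xg J m) (phi2 i m * psi2 i m) * phi2 i m).
        { apply Rmult_le_compat; lra. }
        lra. }
      pose proof (Hmax r Hr) as Hmr.
      pose proof (Hmax (Nat.pred m) ltac:(lia)) as Hml.
      set (K := dt T I * (sigma ^ 2 / 2) / dx J ^ 2).
      assert (HK : 0 < K).
      { unfold K. apply Rdiv_lt_0_compat; [|lra]. apply Rmult_lt_0_compat; lra. }
      assert (Hdiff : phi2 (S i) m - phi1 (S i) m =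
        (phi2 i m - phi1 i m) + dt T I * (G2 - G1)
        + K * (2 * (phi2 i m - phi1 i m) - (phi2 i r - phi1 i r)
               - (phi2 i (Nat.pred m) - phi1 i (Nat.pred m)))).
      { unfold K. unfold Rdiv in *. nra. }
      assert (0 <= dt T I * (G2 - G1)) by (apply Rmult_le_pos; lra).
      assert (0 <= K * (2 * (phi2 i m - phi1 i m) - (phi2 i r - phi1 i r)
               - (phi2 i (Nat.pred m) - phi1 i (Nat.pred m))))
        by (apply Rmult_le_pos; lra).
      lra. }
  intros i j Hi Hj.
  replace i with (I - (I - i))%nat by lia.
  apply Hmain; lia.
Qed.
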